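(* Let $T$ be an $n\times n$ complex matrix with distinct eigenvalues $\lambda_1,\dots,\lambda_n$. Let $u_1,\dots,u_n$ be unit eigenvectors of $T$ with $Tu_i=\lambda_iu_i$, let $v_1,\dots,v_n$ be unit eigenvectors of $T^*$ with $T^*v_i=\overline{\lambda_i}v_i$, and let $U=(u_1|\cdots|u_n)$ and $V=(v_1|\cdots|v_n)$. If $|\det U|\neq|\det V|$, then $T$ is not unitarily equivalent to a complex symmetric matrix.
   Context: A complex symmetric matrix is a square complex matrix $S$ with $S=S^t$. Two matrices $A,B\in M_n(\mathbb{C})$ are unitarily equivalent if $A=W^*BW$ for some unitary $W$. *)

(* Defs.v *)
From HB Require Import structures.
From mathcomp Require Import all_boot all_order all_algebra.
From mathcomp Require Import complex.
From mathcomp Require Import reals.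
Set Implicit Arguments. Unset Strict Implicit. Unset Printing Implicit Defensive.
Import Order.TTheory GRing.Theory Num.Theory.
Local Open Scope ring_scope.

Definition adjmx (C : numClosedFieldType) (m n : nat) (A : 'M[C]_(m, n)) : 'M[C]_(n, m) :=
  map_mx Num.conj (A^T).

Definition unitary_mx (C : numClosedFieldType) (n : nat) (W : 'M[C]_n) : Prop :=
  adjmx W *m W = 1%:M /\ W *m adjmx W = 1%:M.

Definition symmetric_mx (C : numClosedFieldType) (n : nat) (S : 'M[C]_n) : Prop :=
  S^T = S.

Definition unitarily_equivalent (C : numClosedFieldType) (n : nat) (A B : 'M[C]_n) : Prop :=
  exists W : 'M[C]_n, unitary_mx W /\ A = adjmx W *m B *m W.

Definition unit_vec (C : numClosedFieldType) (n : nat) (u : 'cV[C]_n) : Prop :=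
  adjmx u *m u = 1%:M.

Definition cols_mx (C : numClosedFieldType) (n : nat) (u : 'I_n -> 'cV[C]_n) : 'M[C]_n :=
  \matrix_(i < n, j < n) u j i 0.

(* Main.v *)
Require Import Defs.
From HB Require Import structures.
From mathcomp Require Import all_boot all_order all_algebra.
From mathcomp Require Import complex.
From mathcomp Require Import reals.
Import Order.TTheory GRing.Theory Num.Theory.
Local Open Scope ring_scope.

Section Helpers.
Variable C : numClosedFieldType.

Lemma adjmxM m n p (A : 'M[C]_(m, n)) (B : 'M[C]_(n, p)) :
  adjmx (A *m B) = adjmx B *m adjmx A.
Proof. by rewrite /adjmx trmx_mul map_mxM. Qed.

Lemma adjmxK m n (A : 'M[C]_(m, n)) : adjmx (adjmx A) = A.
Proof. by rewrite /adjmx map_trmx trmxK map_mxCK. Qed.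

Lemma cols_mul n (A : 'M[C]_n) (u : 'I_n -> 'cV[C]_n) :
  cols_mx (fun k => A *m u k) = A *m cols_mx u.
Proof. by apply/matrixP => i j; rewrite !mxE; apply: eq_bigr => l _; rewrite !mxE. Qed.

Lemma cols_map n (u : 'I_n -> 'cV[C]_n) :
  cols_mx (fun k => map_mx Num.conj (u k)) = map_mx Num.conj (cols_mx u).
Proof. by apply/matrixP => i j; rewrite !mxE. Qed.

Lemma cols_mulv n (u : 'I_n -> 'cV[C]_n) (x : 'cV[C]_n) :
  cols_mx u *m x = \sum_j x j 0 *: u j.
Proof.
apply/matrixP => i k; rewrite !mxE summxE; apply: eq_bigr => j _.
by rewrite !mxE ord1 mulrC.
Qed.

Lemma cols_diag n (u : 'I_n -> 'cV[C]_n) (a : 'I_n -> C) :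
  cols_mx (fun k => a k *: u k) = cols_mx u *m diag_mx (\row_k a k).
Proof. by apply/matrixP => i j; rewrite mul_mx_diag !mxE mulrC. Qed.

Lemma unit_vec_neq0 n (v : 'cV[C]_n) : unit_vec v -> v != 0.
Proof.
move=> h; apply/eqP => v0; move: h; rewrite /unit_vec v0 mulmx0 => /matrixP/(_ 0 0).
by rewrite !mxE eqxx /= => /eqP; rewrite eq_sym oner_eq0.
Qed.

Lemma indep n (g : 'M[C]_n) (a : 'I_n -> C) (v : 'I_n -> 'cV[C]_n) :
  injective a -> (forall k, v k != 0) -> (forall k, g *m v k = a k *: v k) ->
  cols_mx v \in unitmx.
Proof.
move=> ia nz ev.
pose M := (cols_mx v)^T.
have rowM j : row j M = (v j)^T.
  by apply/rowP => l; rewrite !mxE.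
have evr j : row j M *m g^T = a j *: row j M.
  by rewrite rowM -trmx_mul ev linearZ.
suff : row_free M by rewrite row_free_unit unitmx_tr.
apply: inj_row_free => x x0.
have dx := @mxdirect_sum_eigenspace _ _ _ (g^T) predT a (in2W ia).
have [A_ sA _ uniq] := sub_dsumsmx dx (sub0mx 1 (\sum_(i | predT i) eigenspace g^T (a i))%MS).
have e1 := uniq (fun j => x 0 j *: row j M).
have e2 := uniq (fun _ => 0).
apply/rowP => j; rewrite mxE.
have : x 0 j *: row j M = 0.
  rewrite e1 //; last by rewrite -mulmx_sum_row x0.
  - by rewrite -e2 // => [i _|]; [exact: sub0mx | rewrite big1].
  - by move=> i _; apply/eigenspaceP; rewrite -scalemxAl evr scalerA mulrC -scalerA.
move/eqP; rewrite scaler_eq0 => /orP[/eqP //|].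
by rewrite rowM -(inj_eq (@trmx_inj _ _ _)) trmxK trmx0 (negbTE (nz j)).
Qed.

Lemma eq_cols n (u w : 'I_n -> 'cV[C]_n) : (forall k, u k = w k) -> cols_mx u = cols_mx w.
Proof. by move=> h; apply/matrixP => i j; rewrite !mxE h. Qed.

Lemma adj_conj m n (A : 'M[C]_(m, n)) : adjmx (map_mx Num.conj A) = A^T.
Proof. by rewrite /adjmx map_trmx map_mxCK. Qed.

End Helpers.

Theorem corollary2 (R : realType) (n : nat) (T : 'M[R[i]]_n)
  (lambda : 'I_n -> R[i]) (u v : 'I_n -> 'cV[R[i]]_n) :
  injective lambda ->
  (forall k, unit_vec (u k)) ->
  (forall k, T *m u k = lambda k *: u k) ->
  (forall k, unit_vec (v k)) ->
  (forall k, adjmx T *m v k = Num.conj (lambda k) *: v k) ->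
  `|\det (cols_mx u)| != `|\det (cols_mx v)| ->
  ~ (exists S : 'M[R[i]]_n, symmetric_mx S /\ unitarily_equivalent T S).
Proof.
move=> il hu Tu hv Tv hdet [S [hS [W [[WW1 WW2] hT]]]].
set y := fun k => adjmx W *m map_mx Num.conj (W *m u k).
have ST : S *m W = W *m T by rewrite hT !mulmxA WW2 mul1mx.
have adjT : adjmx T = adjmx W *m map_mx Num.conj S *m W.
  by rewrite hT !adjmxM adjmxK mulmxA /adjmx hS.
have Ty k : adjmx T *m y k = Num.conj (lambda k) *: y k.
  rewrite adjT /y !mulmxA -[_ *m W *m adjmx W]mulmxA WW2 mulmx1.
  by rewrite -mulmxA -map_mxM mulmxA ST -mulmxA Tu -scalemxAr map_mxZ scalemxAr.
have yu k : unit_vec (y k).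
  rewrite /unit_vec /y adjmxM adjmxK adj_conj mulmxA -[_ *m W *m _]mulmxA WW2 mulmx1.
  have -> : (W *m u k)^T = map_mx Num.conj (adjmx (W *m u k)).
    by rewrite /adjmx map_mxCK.
  by rewrite -map_mxM adjmxM -mulmxA [adjmx W *m _]mulmxA WW1 mul1mx hu map_mx1.
have Vu : cols_mx v \in unitmx.
  apply: (@indep _ _ (adjmx T) (fun k => Num.conj (lambda k))) => //.
    by move=> j k /(can_inj (@conjCK _)) /il.
  by move=> k; apply: unit_vec_neq0.
set V := cols_mx v.
have TV : adjmx T *m V = V *m diag_mx (\row_j Num.conj (lambda j)).
  by rewrite -cols_mul -cols_diag; apply: eq_cols => k; rewrite Tv.
pose a k := (invmx V *m y k) k 0.
have ya k : y k = a k *: v k.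
  set c := invmx V *m y k.
  have Vc : V *m c = y k by rewrite mulKVmx.
  have Dc : diag_mx (\row_j Num.conj (lambda j)) *m c = Num.conj (lambda k) *: c.
    apply: (can_inj (mulKmx Vu)); rewrite mulmxA -TV -mulmxA Vc Ty.
    by rewrite -scalemxAr Vc.
  have c0 j : j != k -> c j 0 = 0.
    move=> jk; move/matrixP: Dc => /(_ j 0); rewrite mul_diag_mx !mxE => /eqP.
    rewrite -subr_eq0 -mulrBl mulf_eq0 subr_eq0 => /orP[/eqP e|/eqP //].
    by move: jk; rewrite (il _ _ (can_inj (@conjCK _) e)) eqxx.
  rewrite -Vc cols_mulv (bigD1 k) //= big1 ?addr0 // => j jk.
  by rewrite c0 // scale0r.
have na k : `|a k| = 1.
  have := yu k; rewrite /unit_vec ya.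
  have adjZ : adjmx (a k *: v k) = Num.conj (a k) *: adjmx (v k).
    by apply/matrixP => i j; rewrite !mxE rmorphM.
  rewrite adjZ -scalemxAl -scalemxAr scalerA hv.
  move/matrixP => /(_ 0 0); rewrite !mxE eqxx /= mulr1 => e.
  by apply/eqP; rewrite -sqrp_eq1 // normCKC e.
have dY : \det (cols_mx y) = \det V * \prod_k a k.
  by rewrite (@eq_cols _ _ _ _ ya) cols_diag det_mulmx det_diag; congr (_ * _); apply: eq_bigr => k _; rewrite mxE.
have dW : `|\det W| ^+ 2 = 1.
  have := congr1 determinant WW1; rewrite det_mulmx det1 /adjmx det_map_mx det_tr.
  by rewrite normCKC.
have dY2 : \det (cols_mx y) = Num.conj (\det W) * Num.conj (\det W * \det (cols_mx u)).
  rewrite /y cols_mul cols_map cols_mul det_mulmx /adjmx det_map_mx det_tr.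
  by rewrite det_map_mx det_mulmx.
move/negP: hdet; apply; apply/eqP.
have := congr1 Num.norm dY; rewrite normrM normr_prod big1 ?mulr1 // dY2.
rewrite rmorphM /= !normrM !norm_conjC mulrA -expr2 dW mul1r => ->.
by [].
Qed.
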